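(* Assume that $G=\mathbb Z_3^2$ acts on $\mathbb P^2$ (over $\mathbb C$) in such a way that the action is free outside a finite set. Then one can choose generators $g_1,g_2$ of $G$ and homogeneous coordinates $(x_0,x_1,x_2)$ on $\mathbb P^2$ such that $$g_1\colon(x_0,x_1,x_2)\mapsto(x_0,\omega x_1,\omega^2x_2),\qquad g_2\colon(x_0,x_1,x_2)\mapsto(x_1,x_2,x_0),$$ where $\omega\ne1$ is a cube root of $1$.
   Context: The action is by automorphisms of $\mathbb P^2$; ''free outside a finite set'' means that the set of points with nontrivial stabilizer is finite. *)

(* Defs.v *)
From mathcomp Require Import all_boot all_algebra.
From mathcomp Require Import Rstruct complex.
From Stdlib Require Import Reals.
Set Implicit Arguments. Unset Strict Implicit. Unset Printing Implicit Defensive.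
Import GRing.Theory.
Local Open Scope ring_scope.

Definition CC : numClosedFieldType := complex Rdefinitions.R.

Definition G := ('Z_3 * 'Z_3)%type.

(* Points of P^2 are nonzero column vectors of C^3 up to nonzero scalars.
   Two vectors / matrices are projectively equal if they differ by a nonzero scalar. *)
Definition proj_eq (m n : nat) (A B : 'M[CC]_(m, n)) : Prop :=
  exists2 c : CC, c != 0 & A = c *: B.

(* An action of G on P^2 by automorphisms: a homomorphism G -> PGL_3(C),
   given by lifts rho g in GL_3(C); g acts by [v] |-> [rho g *m v]. *)
Definition proj_action (rho : G -> 'M[CC]_3) : Prop :=
  (forall g, rho g \in unitmx) /\
  (forall g h, proj_eq (rho (g + h)) (rho g *m rho h)).

Definition nontriv_stab (rho : G -> 'M[CC]_3) (v : 'cV[CC]_3) : Prop :=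
  exists2 g : G, g != 0 & exists c : CC, rho g *m v = c *: v.

Definition free_outside_finite (rho : G -> 'M[CC]_3) : Prop :=
  exists S : seq 'cV[CC]_3,
    forall v : 'cV[CC]_3, v != 0 -> nontriv_stab rho v ->
      exists2 w, w \in S & proj_eq v w.

Definition generates (g1 g2 : G) : Prop :=
  forall g : G, exists a b : nat, g = g1 *+ a + g2 *+ b.

Definition diag_w (w : CC) : 'M[CC]_3 :=
  \matrix_(i < 3, j < 3) (if i == j then w ^+ i else 0).

(* (x0,x1,x2) |-> (x1,x2,x0): the new i-th coordinate is x_{i+1 mod 3}. *)
Definition cyc_perm : 'M[CC]_3 :=
  \matrix_(i < 3, j < 3) (if (j : nat) == modn (nat_of_ord i).+1 3 then 1 else 0).

(* Main.v *)
Require Import Defs.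
From mathcomp Require Import all_boot all_algebra.
From mathcomp Require Import Rstruct complex.
From mathcomp Require Import ring.
From Stdlib Require Import ClassicalEpsilon Classical_Prop.
Import GRing.Theory Num.Theory.
Local Open Scope ring_scope.

Lemma eig_exists (M : 'M[CC]_3) : exists l (v : 'cV[CC]_3), v != 0 /\ M *m v = l *: v.
Proof.
have [l] := @eigenvalue_closed CC 3 M^T isT.
move/eigenvalueP => [r Hr nz]; exists l, r^T; split; first by rewrite trmx_eq0.
by rewrite -(trmxK M) -trmx_mul Hr linearZ.
Qed.

Lemma noninv_ker (M : 'M[CC]_3) : M \notin unitmx -> exists v : 'cV[CC]_3, v != 0 /\ M *m v = 0.
Proof.
rewrite unitmxE unitfE negbK -det_tr => /det0P [r nz Hr].
by exists r^T; split; [rewrite trmx_eq0 | rewrite -(trmxK M) -trmx_mul Hr trmx0].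
Qed.

Lemma cube_roots (z x : CC) : z ^+ 3 = 1 -> z != 1 -> x ^+ 3 = 1 ->
  [\/ x = 1, x = z | x = z ^+ 2].
Proof.
move=> z3 z1 x3.
have hz : 1 + z + z ^+ 2 = 0.
  have : (z - 1) * (1 + z + z ^+ 2) = 0.
    have -> : (z - 1) * (1 + z + z ^+ 2) = z ^+ 3 - 1 by ring.
    by rewrite z3 subrr.
  by move/eqP; rewrite mulf_eq0 subr_eq0 (negbTE z1) /= => /eqP.
have : (x - 1) * (x - z) * (x - z ^+ 2) = 0.
  have -> : (x - 1) * (x - z) * (x - z ^+ 2) = x ^+ 3 - 1 - (1 + z + z ^+ 2) * (x ^+ 2 - z * x + z - 1)
    by ring.
  by rewrite hz x3 mul0r subrr subr0.
move/eqP; rewrite !mulf_eq0 !subr_eq0 => /orP [/orP [] |] /eqP ->;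
  by [apply: Or31 | apply: Or32 | apply: Or33].
Qed.


Lemma nat_neq0 (n : nat) : (n.+1)%:R != 0 :> CC.
Proof. by rewrite pnatr_eq0. Qed.

Lemma pinj (u w : 'cV[CC]_3) (n m : nat) (k : CC) : u != 0 -> (forall k, w != k *: u) ->
  u + n%:R *: w = k *: (u + m%:R *: w) -> n = m.
Proof.
move=> unz wn H.
have E : (1 - k) *: u = (k * m%:R - n%:R) *: w.
  have H' : k *: u = u + n%:R *: w - k *: (m%:R *: w) by rewrite H scalerDr addrK.
  rewrite scalerBl scale1r scalerBl -scalerA H'.
  by rewrite opprB addrA (addrC u (k *: _)) addrKA.
have [h|h] := eqVneq (k * m%:R - n%:R) 0.
  move: E; rewrite h scale0r => /eqP; rewrite scalemx_eq0 (negbTE unz) orbF.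
  move/eqP/subr0_eq => k1; move: h; rewrite -k1 mul1r => /subr0_eq /eqP; rewrite eqr_nat => /eqP ->//.
exfalso; apply: (negP (wn ((k * m%:R - n%:R)^-1 * (1 - k)))).
by rewrite -scalerA E scalerA mulVf // scale1r.
Qed.

Lemma no2 rho g (u w : 'cV[CC]_3) t : free_outside_finite rho -> g != 0 -> u != 0 ->
  (forall k, w != k *: u) -> rho g *m u = t *: u -> rho g *m w = t *: w -> False.
Proof.
move=> [S HS] gnz unz wn Hu Hw.
pose p (n : nat) := u + n%:R *: w.
have pnz n : p n != 0.
  case: n => [|n]; first by rewrite /p scale0r addr0.
  apply/negP => /eqP H; apply: (negP (wn (- (n.+1%:R)^-1))).
  move/eqP: H; rewrite addr_eq0 => /eqP H.
  by rewrite H scaleNr scalerN opprK scalerA mulVf ?nat_neq0 // scale1r.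
have pst n : nontriv_stab rho (p n).
  exists g => //; exists t.
  by rewrite /p mulmxDr -scalemxAr Hu Hw scalerDr !scalerA mulrC.
have inS (n : 'I_(size S).+1) : exists i : 'I_(size S), proj_eq (p n) (S`_i).
  have [x xS Hx] := HS _ (pnz n) (pst n).
  have xi : (index x S < size S)%N by rewrite index_mem.
  by exists (Ordinal xi); rewrite /= nth_index.
pose f (n : 'I_(size S).+1) := proj1_sig (constructive_indefinite_description _ (inS n)).
have finj : injective f.
  move=> n m; rewrite /f; case: constructive_indefinite_description => i /= [c1 c1nz H1].
  case: constructive_indefinite_description => j /= [c2 c2nz H2] eij; subst j.
  apply: val_inj; apply: (@pinj u w _ _ (c1 / c2)) => //.
  by rewrite -/(p n) -/(p m) H1 H2 scalerA divfK.
by have := leq_card f finj; rewrite !card_ord ltnn.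
Qed.

Definition e1 : G := (1, 0).
Definition e2 : G := (0, 1).
Lemma G3 (g : G) : g + g + g = 0.
Proof.
apply/eqP; case: g => [[[|[|[|m]]] Ha] [[|[|[|n]]] Hb]] //.
Qed.
Lemma Gnz : [&& e1 != 0, e2 != 0, e1 + e2 != 0 & e1 + (e1 + e2) != 0]. Proof. by []. Qed.
Lemma gen : generates e1 e2.
Proof.
by case=> [[[|[|[|m]]] Ha] [[|[|[|n]]] Hb]] //;
  [exists 0%N, 0%N | exists 0%N, 1%N | exists 0%N, 2%N | exists 1%N, 0%N | exists 1%N, 1%N
  | exists 1%N, 2%N | exists 2%N, 0%N | exists 2%N, 1%N | exists 2%N, 2%N]; apply/eqP.
Qed.


Lemma scal_cancel (x y : CC) (v : 'cV[CC]_3) : v != 0 -> x *: v = y *: v -> x = y.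
Proof.
move=> vnz /eqP; rewrite -subr_eq0 -scalerBl scalemx_eq0 (negbTE vnz) orbF.
by move/eqP/subr0_eq.
Qed.

Lemma eig_pow3 (M : 'M[CC]_3) (v : 'cV[CC]_3) (l : CC) : M *m v = l *: v -> M *m M *m M *m v = l ^+ 3 *: v.
Proof.
by move=> H; rewrite -!mulmxA H -!scalemxAr H -scalemxAr H !scalerA -!expr2 -exprSr.
Qed.

Lemma rho0 rho : proj_action rho -> exists2 c, c != 0 & rho 0 = c%:M.
Proof.
move=> [Hu Hm]; have [c cnz H] := Hm 0 0; rewrite addr0 in H.
exists c^-1; first by rewrite invr_eq0.
have : invmx (rho 0) *m rho 0 = c *: rho 0.
  by rewrite {2}H -scalemxAr mulKmx.
rewrite mulVmx // => E; by rewrite -scalemx1 E scalerA mulVf // scale1r.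
Qed.

Lemma rho3 rho g : proj_action rho -> exists2 c, c != 0 & rho g *m rho g *m rho g = c%:M.
Proof.
move=> Hact; have [Hu Hm] := Hact; have [d dnz Hd] := rho0 _ Hact.
have [a anz Ha] := Hm g g; have [b bnz Hb] := Hm (g + g) g.
rewrite G3 Hd Ha -scalemxAl scalerA in Hb.
have abnz : b * a != 0 by rewrite mulf_neq0.
exists (d / (b * a)); first by rewrite mulf_neq0 // invr_eq0.
by rewrite -scalemx1 mulrC -scalerA scalemx1 Hb scalerA mulVf // scale1r.
Qed.

Lemma rho_comm rho : proj_action rho ->
  exists2 c, c != 0 & rho e1 *m rho e2 = c *: (rho e2 *m rho e1).
Proof.
move=> [Hu Hm]; have [a anz Ha] := Hm e1 e2; have [b bnz Hb] := Hm e2 e1.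
rewrite addrC Ha in Hb.
exists (b / a); first by rewrite mulf_neq0 // invr_eq0.
by rewrite mulrC -scalerA -Hb scalerA mulVf // scale1r.
Qed.

Lemma comm_cube (R1 R2 : 'M[CC]_3) c : R1 \in unitmx -> R2 \in unitmx ->
  R1 *m R2 = c *: (R2 *m R1) -> c ^+ 3 = 1.
Proof.
move=> U1 U2 H.
have := congr1 determinant H; rewrite detZ !(@detM _ 2) [\det R1 * _]mulrC => E.
have : \det R2 * \det R1 != 0.
  by rewrite mulf_neq0 // -unitfE -unitmxE.
move=> nz; apply/eqP; rewrite -subr_eq0; apply/eqP.
apply: (mulIf nz); rewrite mulrBl mul1r -E subrr mul0r //.
Qed.


Lemma prim_root : exists z : CC, [/\ z ^+ 3 = 1, z != 1 & z ^+ 2 + z + 1 = 0].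
Proof.
have /closed_rootP [z rz] : size ('X^2 + 'X + 1 : {poly CC}) != 1%N.
  by rewrite -addrA size_addl ?size_polyXn ?size_XaddC.
move/rootP: rz; rewrite !hornerE => hz.
exists z; split => //.
  have : z ^+ 3 - 1 = (z - 1) * (z ^+ 2 + z + 1) by ring.
  by rewrite hz mulr0 => /subr0_eq.
apply/negP => /eqP z1.
have : (3%:R : CC) = 0 by rewrite -hz z1 expr1n; ring.
by move/eqP; rewrite pnatr_eq0.
Qed.

Lemma second_eig (A : 'M[CC]_3) l a (v0 : 'cV[CC]_3) :
  A *m A *m A = a%:M -> l ^+ 3 = a -> (A = l%:M -> False) ->
  exists zz (v1 : 'cV[CC]_3), [/\ zz ^+ 3 = 1, zz != 1, v1 != 0 & A *m v1 = (l * zz) *: v1].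
Proof.
move=> HA la Anl.
have [z [z3 z1 hz]] := prim_root.
have eigk (m : CC) : A - m%:M \notin unitmx -> exists v1 : 'cV_3, v1 != 0 /\ A *m v1 = m *: v1.
  move/noninv_ker => [v [vnz Hv]]; exists v; split => //.
  by move: Hv; rewrite mulmxBl mul_scalar_mx => /subr0_eq.
case: (boolP (A - (l * z)%:M \in unitmx)) => U1; last first.
  by have [v [? ?]] := eigk _ U1; exists z, v; split.
case: (boolP (A - (l * z ^+ 2)%:M \in unitmx)) => U2; last first.
  have [v [? ?]] := eigk _ U2; exists (z ^+ 2), v; split => //.
    by rewrite -exprM mulnC exprM z3 expr1n.
  apply/negP => /eqP h; have : z = 1 by rewrite -z3 exprS h mulr1.
  by move/eqP; rewrite (negbTE z1).
exfalso; apply: Anl.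
have Hp : (('X - l%:P) * ('X - (l * z)%:P) * ('X - (l * z ^+ 2)%:P) : {poly CC})
          = 'X^3 - (l ^+ 3)%:P.
  have hZ : (z%:P) ^+ 2 + z%:P + 1 = 0 :> {poly CC}.
    by rewrite -(rmorphXn polyC) -(rmorphD polyC) -(rmorph1 polyC) -(rmorphD polyC) hz.
  rewrite !(rmorphM polyC).
  transitivity ('X^3 - (l%:P) ^+ 3 - ((z%:P) ^+ 2 + z%:P + 1) *
     (l%:P * 'X^2 - (l%:P)^+2 * z%:P * 'X + (l%:P) ^+ 3 * (z%:P - 1))); first by ring.
  by rewrite hZ mul0r subr0.
have := congr1 (horner_mx A) Hp.
rewrite !(rmorphM (horner_mx A)) !(rmorphB (horner_mx A)) /= !horner_mx_X !horner_mx_C rmorphXn /= horner_mx_X.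
have -> : A ^+ 3 = A *m A *m A.
  by rewrite !exprS expr0 mulr1 mulrA.
rewrite HA la subrr => H0.
have H1 : (A - l%:M) *m (A - (l * z)%:M) *m (A - (l * z ^+ 2)%:M) = 0 by exact: H0.
move: H1 => /(congr1 (mulmx^~ (invmx (A - (l * z ^+ 2)%:M)))); rewrite mul0mx mulmxK //.
move=> /(congr1 (mulmx^~ (invmx (A - (l * z)%:M)))); rewrite mul0mx mulmxK //.
by move/subr0_eq.
Qed.


Lemma comm_case rho : proj_action rho -> free_outside_finite rho ->
  rho e1 *m rho e2 = rho e2 *m rho e1 -> False.
Proof.
move=> Hact Hfree Hcomm; have [Hu Hm] := Hact.
have /and4P [e1nz e2nz e12nz e112nz] := Gnz.
have [a anz HA] := rho3 _ e1 Hact.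
have [b bnz HB] := rho3 _ e2 Hact.
have [k1 k1nz Hk1] := Hm e1 e2.
have [k2 k2nz Hk2] := Hm e1 (e1 + e2).
rewrite Hk1 in Hk2.
move: HA HB Hcomm Hk1 Hk2; set A := rho e1; set B := rho e2 => HA HB Hcomm Hk1 Hk2.
have [l [v0 [v0nz Hv0]]] := eig_exists A.
have la : l ^+ 3 = a.
  by apply: (scal_cancel _ _ _ v0nz); rewrite -(eig_pow3 _ _ _ Hv0) HA mul_scalar_mx.
have lnz : l != 0 by apply: contraNneq anz => l0; rewrite -la l0 expr0n.
have Anl : A = l%:M -> False.
  move=> Al; apply: (no2 _ _ (delta_mx 0 0) (delta_mx 1 0) l Hfree e1nz).
  - by apply/negP => /eqP/matrixP/(_ 0 0); rewrite !mxE /= => /eqP; rewrite oner_eq0.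
  - move=> k; apply/negP => /eqP/matrixP/(_ 1 0); rewrite !mxE /= mulr0 => /eqP.
    by rewrite oner_eq0.
  - by rewrite -/A Al mul_scalar_mx.
  - by rewrite -/A Al mul_scalar_mx.
have [zz [v1 [zz3 zz1 v1nz Hv1]]] := second_eig _ _ _ v0 HA la Anl.
have beig (v : 'cV[CC]_3) m : v != 0 -> A *m v = m *: v -> exists β, B *m v = β *: v.
  move=> vnz Hv; case: (classic (exists β, B *m v = β *: v)) => // Hn; exfalso.
  apply: (no2 _ _ v (B *m v) m Hfree e1nz vnz) => //.
  - by move=> k; apply/negP => /eqP E; apply: Hn; exists k.
  - by rewrite -/A mulmxA Hcomm -mulmxA Hv scalemxAr.
have [b0 Hb0] := beig v0 l v0nz Hv0.
have [b1 Hb1] := beig v1 (l * zz) v1nz Hv1.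
have b0b : b0 ^+ 3 = b by apply: (scal_cancel _ _ _ v0nz); rewrite -(eig_pow3 _ _ _ Hb0) HB mul_scalar_mx.
have b1b : b1 ^+ 3 = b by apply: (scal_cancel _ _ _ v1nz); rewrite -(eig_pow3 _ _ _ Hb1) HB mul_scalar_mx.
have b0nz : b0 != 0 by apply: contraNneq bnz => l0; rewrite -b0b l0 expr0n.
pose q := b1 / b0.
have q3 : q ^+ 3 = 1 by rewrite /q exprMn exprVn b0b b1b mulfV.
have b1q : b1 = q * b0 by rewrite /q divfK.
have v1n : forall k, v1 != k *: v0.
  move=> k; apply/negP => /eqP E.
  have : A *m v1 = l *: v1 by rewrite E -scalemxAr Hv0 !scalerA mulrC.
  rewrite Hv1 => /(scal_cancel _ _ _ v1nz) h.
  by move/negP: zz1; apply; apply/eqP; apply: (mulfI lnz); rewrite mulr1.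
have fin (g : G) t : g != 0 -> rho g *m v0 = t *: v0 -> rho g *m v1 = t *: v1 -> False.
  by move=> gnz H0 H1; apply: (no2 _ _ _ _ _ Hfree gnz v0nz v1n H0 H1).
have act1 (v : 'cV[CC]_3) x y : A *m v = x *: v -> B *m v = y *: v ->
    rho (e1 + e2) *m v = (k1 * (x * y)) *: v.
  move=> Ha Hb; rewrite Hk1 -scalemxAl -mulmxA Hb -scalemxAr Ha !scalerA.
  by congr (_ *: _); ring.
have act2 (v : 'cV[CC]_3) x y : A *m v = x *: v -> B *m v = y *: v ->
    rho (e1 + (e1 + e2)) *m v = (k2 * k1 * (x * (x * y))) *: v.
  move=> Ha Hb; rewrite Hk2 -scalemxAr -!scalemxAl -!mulmxA Hb -!scalemxAr Ha -scalemxAr Ha.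
  by rewrite !scalerA; congr (_ *: _); ring.
case: (cube_roots _ _ zz3 zz1 q3) => hq.
- apply: (fin e2 b0 e2nz) => //.
  by rewrite -/B Hb1 b1q hq mul1r.
- apply: (fin _ _ e112nz (act2 _ _ _ Hv0 Hb0)).
  rewrite (act2 _ _ _ Hv1 Hb1) b1q hq; congr (_ *: _).
  transitivity (k2 * k1 * (l * (l * b0)) * zz ^+ 3); first by ring.
  by rewrite zz3 mulr1.
- apply: (fin _ _ e12nz (act1 _ _ _ Hv0 Hb0)).
  rewrite (act1 _ _ _ Hv1 Hb1) b1q hq; congr (_ *: _).
  transitivity (k1 * (l * b0) * zz ^+ 3); first by ring.
  by rewrite zz3 mulr1.
Qed.


Lemma sum3 (f : 'I_3 -> CC) : \sum_(k < 3) f k = f 0 + f 1 + f 2.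
Proof.
rewrite !big_ord_recl big_ord0 addr0 addrA.
by congr (f _ + f _ + f _); apply: val_inj.
Qed.

Lemma ord3 (i : 'I_3) : [\/ i = 0, i = 1 | i = 2].
Proof.
case: i => [[|[|[|?]]] Hi] //; [apply: Or31 | apply: Or32 | apply: Or33]; exact: val_inj.
Qed.

Lemma ind3 (R : 'M[CC]_3) (f0 f1 f2 : 'cV[CC]_3) l0 l1 l2 x0 x1 x2 :
  R *m f0 = l0 *: f0 -> R *m f1 = l1 *: f1 -> R *m f2 = l2 *: f2 ->
  l0 != l1 -> l0 != l2 -> f0 != 0 ->
  x0 *: f0 + x1 *: f1 + x2 *: f2 = 0 -> x0 = 0.
Proof.
move=> H0 H1 H2 n1 n2 f0nz E.
have sh (f : 'cV[CC]_3) l m : R *m f = l *: f -> (R - m%:M) *m f = (l - m) *: f.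
  by move=> Hf; rewrite mulmxBl mul_scalar_mx Hf scalerBl.
pose T := (R - l1%:M) *m (R - l2%:M).
have shT (f : 'cV[CC]_3) l : R *m f = l *: f -> T *m f = ((l - l1) * (l - l2)) *: f.
  by move=> Hf; rewrite -mulmxA (sh _ _ _ Hf) -scalemxAr (sh _ _ _ Hf) scalerA mulrC.
have := congr1 (mulmx T) E.
rewrite mulmx0 !mulmxDr -!scalemxAr (shT _ _ H0) (shT _ _ H1) (shT _ _ H2).
rewrite !subrr mul0r mulr0 !scale0r !scaler0 !addr0 scalerA => /eqP.
rewrite scalemx_eq0 (negbTE f0nz) orbF !mulf_eq0 !subr_eq0 (negbTE n1) (negbTE n2).
by rewrite !orbF => /eqP.
Qed.


Lemma construct (R1 R2 : 'M[CC]_3) c a : R1 \in unitmx -> R2 \in unitmx ->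
  R1 *m R2 = c *: (R2 *m R1) -> c ^+ 3 = 1 -> c != 1 -> R2 *m R2 *m R2 = a%:M ->
  exists A : 'M[CC]_3, [/\ A \in unitmx,
     proj_eq (A *m R1 *m invmx A) (diag_w (c ^+ 2)) &
     proj_eq (A *m R2 *m invmx A) cyc_perm].
Proof.
move=> U1 U2 HR c3 c1 HA.
have [l [v [vnz Hv]]] := eig_exists R1.
have lnz : l != 0.
  apply: contraNneq vnz => l0; rewrite -(mulKmx U1 v) Hv l0 scale0r mulmx0 //.
have anz : a != 0.
  have : (a%:M : 'M[CC]_3) \in unitmx by rewrite -HA !unitmx_mul U2.
  by rewrite unitmxE det_scalar unitfE expf_eq0.
pose s := 3.-root (a^-1).
have s3 : s ^+ 3 = a^-1 by rewrite /s rootCK.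
have snz : s != 0 by apply: contra_eq_neq s3 => ->; rewrite expr0n /= eq_sym invr_eq0.
pose F0 := v.
pose F2 := s *: (R2 *m F0).
pose F1 := s *: (R2 *m F2).
have step (x : 'cV[CC]_3) m : R1 *m x = m *: x ->
    R1 *m (s *: (R2 *m x)) = (c * m) *: (s *: (R2 *m x)).
  move=> Hx; rewrite -!scalemxAr mulmxA HR -scalemxAl -mulmxA Hx -scalemxAr.
  by rewrite !scalerA; congr (_ *: _); ring.
have nstep (x : 'cV[CC]_3) : x != 0 -> s *: (R2 *m x) != 0.
  move=> xnz; rewrite scalemx_eq0 (negbTE snz) /=.
  by apply: contraNneq xnz => H; rewrite -(mulKmx U2 x) H mulmx0.
have E0 : R1 *m F0 = l *: F0 by [].
have E2 : R1 *m F2 = (c * l) *: F2 by apply: step.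
have E1 : R1 *m F1 = (c * (c * l)) *: F1 by apply: step.
have F2nz : F2 != 0 by apply: nstep.
have F1nz : F1 != 0 by apply: nstep.
have cyc1 : s *: (R2 *m F1) = F0.
  rewrite /F1 /F2 -!scalemxAr !mulmxA HA !scalerA mul_scalar_mx scalerA.
  have -> : s * (s * s) * a = s ^+ 3 * a by ring.
  by rewrite s3 mulVf // scale1r.
have cc1 : c * c != 1.
  apply/negP => /eqP h; move/negP: c1; apply; apply/eqP.
  by rewrite -c3 exprS expr2 h mulr1.
have clnz : c * l != 0.
  by rewrite mulf_neq0 //; apply: contra_eq_neq c3 => ->; rewrite expr0n /= eq_sym oner_eq0.
have d01 : l != c * (c * l).
  apply/negP => /eqP h; move/negP: cc1; apply; apply/eqP; apply: (mulIf lnz).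
  by rewrite mul1r -mulrA -h.
have d02 : l != c * l.
  apply/negP => /eqP h; move/negP: c1; apply; apply/eqP; apply: (mulIf lnz).
  by rewrite mul1r -h.
have d12 : c * (c * l) != c * l.
  apply/negP => /eqP h; move/negP: c1; apply; apply/eqP; apply: (mulIf clnz).
  by rewrite mul1r h.
pose Fm (j : 'I_3) := if j == 0 then F0 else if j == 1 then F1 else F2.
pose P := \matrix_(i < 3, j < 3) Fm j i 0.
have Pmul (M : 'M[CC]_3) : M *m P = \matrix_(i < 3, j < 3) (M *m Fm j) i 0.
  by apply/matrixP => i j; rewrite !mxE; apply: eq_bigr => k _; rewrite !mxE.
have Px (x : 'cV[CC]_3) : P *m x = x 0 0 *: F0 + x 1 0 *: F1 + x 2 0 *: F2.
  apply/matrixP => i j; rewrite (ord1 j) !mxE sum3 !mxE.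
  by rewrite /Fm /= ![_ * x _ _]mulrC.
have PU : P \in unitmx.
  rewrite unitmxE unitfE -det_tr; apply/negP => /det0P [r rnz Hr].
  have Hx : P *m r^T = 0 by rewrite -(trmxK P) -trmx_mul Hr trmx0.
  rewrite Px in Hx.
  have x0 : r^T 0 0 = 0 by apply: (ind3 _ _ _ _ _ _ _ _ _ _ E0 E1 E2 d01 d02 vnz Hx).
  have x1 : r^T 1 0 = 0.
    apply: (ind3 _ _ _ _ _ _ _ _ _ _ E1 E0 E2 _ d12 F1nz); first by rewrite eq_sym.
    by rewrite (addrC (_ *: F1)); exact: Hx.
  have x2 : r^T 2 0 = 0.
    apply: (ind3 _ _ _ _ _ _ _ _ _ _ E2 E0 E1 _ _ F2nz); [by rewrite eq_sym | by rewrite eq_sym |].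
    by rewrite -addrA addrC; exact: Hx.
  move/negP: rnz; apply; rewrite -trmx_eq0; apply/eqP/matrixP => i j.
  rewrite (ord1 j) [RHS]mxE.
  by case: (ord3 i) => ->.
have ER1 : R1 *m P = P *m (l *: diag_w (c ^+ 2)).
  rewrite Pmul; apply/matrixP => i j; rewrite [LHS]mxE [RHS]mxE sum3.
  case: (ord3 j) => -> /=; rewrite /Fm /=.
  - by rewrite E0 !mxE eqxx !mulr0 !addr0 expr0 mulr1 mulrC.
  - by rewrite E1 !mxE eqxx !mulr0 add0r addr0 expr1; ring.
  - have c4 : (c ^+ 2) ^+ 2 = c by rewrite -exprM exprS c3 mulr1.
    by rewrite E2 !mxE eqxx !mulr0 !add0r c4; ring.
have ER2 : (s *: R2) *m P = P *m cyc_perm.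
  rewrite Pmul; apply/matrixP => i j; rewrite [LHS]mxE [RHS]mxE sum3.
  case: (ord3 j) => -> /=; rewrite /Fm /=.
  - by rewrite -scalemxAl !mxE !mulr0 !add0r mulr1.
  - by rewrite -scalemxAl cyc1 !mxE !mulr0 !addr0 mulr1.
  - by rewrite -scalemxAl !mxE !mulr0 add0r addr0 mulr1.
exists (invmx P); split.
- by rewrite unitmx_inv.
- rewrite invmxK -mulmxA ER1 mulKmx //.
  by exists l.
- have E2' : R2 *m P = s^-1 *: (P *m cyc_perm).
    by rewrite -ER2 -scalemxAl scalerA mulVf // scale1r.
  rewrite invmxK -mulmxA E2' -scalemxAr mulKmx //.
  by exists s^-1; rewrite // invr_eq0.
Qed.


Theorem lemma5p5 (rho : G -> 'M[CC]_3) :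
  proj_action rho -> free_outside_finite rho ->
  exists (g1 g2 : G) (A : 'M[CC]_3) (w : CC),
    [/\ generates g1 g2, A \in unitmx, w ^+ 3 = 1, w != 1
      & proj_eq (A *m rho g1 *m invmx A) (diag_w w) /\
        proj_eq (A *m rho g2 *m invmx A) cyc_perm].
Proof.
move=> Hact Hfree; have [Hu Hm] := Hact.
have [c cnz Hc] := rho_comm _ Hact.
have c3 := comm_cube _ _ _ (Hu e1) (Hu e2) Hc.
case: (eqVneq c 1) => [c1 | c1].
  by exfalso; apply: (comm_case _ Hact Hfree); rewrite Hc c1 scale1r.
have [a anz HA] := rho3 _ e2 Hact.
have [A [AU H1 H2]] := construct _ _ _ _ (Hu e1) (Hu e2) Hc c3 c1 HA.
exists e1, e2, A, (c ^+ 2); split => //.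
- exact: gen.
- by rewrite -exprM mulnC exprM c3 expr1n.
- apply/negP => /eqP h; have : c = 1 by rewrite -c3 exprS h mulr1.
  by move/eqP; rewrite (negbTE c1).
Qed.
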